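(* Let $\alpha=0$ and $\lambda\in\mathbb{N}$. Define functions $g(s;0,\lambda)$ by $g(s;0,0)=0$, $$g(s;0,1)=1-\frac{I_0^2(\sqrt s)}{I_1^2(\sqrt s)},$$ and, for $\lambda\ge1$, the difference equation in $\lambda$ $$\frac{1}{\sqrt{1-g(s;0,\lambda+1)}}+\frac{1}{\sqrt{1-g(s;0,\lambda-1)}}=-\frac{2\lambda\sqrt{1-g(s;0,\lambda)}}{\sqrt s\,g(s;0,\lambda)}.$$ Then for each positive integer $\lambda$, $g(s;0,\lambda)$ is an exact solution of $$\frac{d^2g}{ds^2}=\frac{3g-1}{2g(g-1)}\left(\frac{dg}{ds}\right)^2-\frac1s\frac{dg}{ds}-\frac{\lambda^2(g-1)^2}{2s^2g}+\frac{g}{2s}$$ (i.e. $P_V(0,-\frac{\lambda^2}{2},\frac12,0)$), and $$\mathcal{H}(s;0,\lambda)=\frac{(sg'(s;0,\lambda))^2}{4g(s;0,\lambda)(g(s;0,\lambda)-1)^2}-\frac{\lambda^2}{4g(s;0,\lambda)}+\frac{sg(s;0,\lambda)}{4(g(s;0,\lambda)-1)}$$ is the corresponding solution of $(s\mathcal{H}'')^2=\mathcal{H}'(4\mathcal{H}'-1)(\mathcal{H}-s\mathcal{H}')+\frac1{16}\left[4\lambda\mathcal{H}'-\lambda\right]^2$.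
   Context: $I_k$ denotes the modified Bessel function of the first kind of order $k$. *)

(* Defs.v *)
From Stdlib Require Import Reals Factorial.
From Coquelicot Require Import Coquelicot.
Open Scope R_scope.

(* Modified Bessel function of the first kind of order k:
   I_k(x) = sum_{m>=0} (x/2)^(2m+k) / (m! (m+k)!). *)
Definition besselI (k : nat) (x : R) : R :=
  (x / 2) ^ k *
  PSeries (fun m : nat => / INR (fact m * fact (m + k))) ((x / 2) ^ 2).

Definition g1 (s : R) : R :=
  1 - (besselI 0 (sqrt s)) ^ 2 / (besselI 1 (sqrt s)) ^ 2.

(* The difference equation solved for g(s;0,lam+1):
   1/sqrt(1 - g_{lam+1}) = X := -2 lam sqrt(1-g_lam)/(sqrt s g_lam) - 1/sqrt(1-g_{lam-1}),
   hence g_{lam+1} = 1 - 1/X^2. *)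
Definition gnext (lam gm g s : R) : R :=
  let X := - (2 * lam * sqrt (1 - g)) / (sqrt s * g) - / sqrt (1 - gm) in
  1 - / (X ^ 2).

(* gpair n s = (g(s;0,n), g(s;0,n+1)) *)
Fixpoint gpair (n : nat) (s : R) : R * R :=
  match n with
  | O => (0, g1 s)
  | S m => let (a, b) := gpair m s in (b, gnext (INR (S m)) a b s)
  end.

Definition g (lam : nat) (s : R) : R := fst (gpair lam s).

Definition Hfun (lam : nat) (s : R) : R :=
  let G := g lam s in
  let G' := Derive (g lam) s in
  (s * G') ^ 2 / (4 * G * (G - 1) ^ 2) - (INR lam) ^ 2 / (4 * G)
  + s * G / (4 * (G - 1)).

(* Main.v *)
Require Import Defs.
From Stdlib Require Import Reals Lra Lia Factorial.
From Coquelicot Require Import Coquelicot.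
Open Scope R_scope.

Definition ca (k : nat) : nat -> R := fun m => / INR (fact m * fact (m + k)).

Lemma ca_pos k m : 0 < ca k m.
Proof. unfold ca. apply Rinv_0_lt_compat. apply lt_0_INR.
  pose proof (lt_O_fact m). pose proof (lt_O_fact (m+k)). nia. Qed.

Lemma rad_ca k : CV_radius (ca k) = p_infty.
Proof.
  apply CV_radius_infinite_DAlembert.
  - intros n. apply Rgt_not_eq, ca_pos.
  - apply is_lim_seq_le_le with (u := fun _ => 0) (w := fun n => / INR (S n)).
    + intros n. split. apply Rabs_pos.
      unfold ca. rewrite Rabs_pos_eq.
      2:{ apply Rlt_le, Rdiv_lt_0_compat; apply Rinv_0_lt_compat, lt_0_INR;
          pose proof (lt_O_fact n); pose proof (lt_O_fact (n+k));
          pose proof (lt_O_fact (S n)); pose proof (lt_O_fact (S n+k)); nia. }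
      assert (H1 : (fact (n + k) <= fact (S n + k))%nat) by (apply fact_le; lia).
      change (fact (S n)) with (S n * fact n)%nat.
      pose proof (lt_O_fact n); pose proof (lt_O_fact (n+k)).
      apply le_INR in H1.
      assert (0 < INR (fact n)) by (apply lt_0_INR; lia).
      assert (0 < INR (fact (n+k))) by (apply lt_0_INR; lia).
      assert (0 < INR (S n)) by (apply lt_0_INR; lia).
      rewrite !mult_INR. unfold Rdiv. rewrite !Rinv_inv.
      rewrite Rinv_mult, Rinv_mult.
      apply Rle_trans with (/ (INR (S n)) * (/ INR (fact n) * INR (fact n)) * (/ INR (fact (S n + k)) * INR (fact (n + k)))).
      right; ring.
      rewrite Rinv_l by lra. 
      rewrite Rmult_1_r. apply Rle_trans with (/ INR (S n) * 1); [|lra]. apply Rmult_le_compat_l. apply Rlt_le, Rinv_0_lt_compat; lra.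
      apply Rmult_le_reg_l with (INR (fact (S n + k))). lra.
      rewrite <- Rmult_assoc, Rinv_r by lra. lra.
    + apply is_lim_seq_const.
    + replace (Finite 0) with (Rbar_inv p_infty) by reflexivity.
      apply (is_lim_seq_inv (fun n => INR (S n))). 
      apply (is_lim_seq_incr_1 INR). apply is_lim_seq_INR. discriminate.
Qed.

Lemma exps_ca k x : ex_pseries (ca k) x.
Proof. apply CV_radius_inside. rewrite rad_ca. exact I. Qed.

Lemma Series_zero : Series (fun _ => 0) = 0.
Proof. transitivity (Series (fun n => 0 * 0)).
  apply Series_ext; intros; ring. rewrite Series_scal_l. ring. Qed.

Lemma PS_nonneg (a : nat -> R) x : (forall n, 0 <= a n) -> 0 <= x ->
  ex_pseries a x -> 0 <= PSeries a x.
Proof.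
  intros Ha Hx He. unfold PSeries.
  rewrite <- Series_zero. apply Series_le.
  - intros n. split. lra. apply Rmult_le_pos; auto. apply pow_le; auto.
  - revert He. apply ex_series_ext. intros n. rewrite pow_n_pow. unfold scal; simpl; unfold mult; simpl; ring.
Qed.

Lemma PS_ge0 (a : nat -> R) x : (forall n, 0 <= a n) -> 0 <= x ->
  ex_pseries a x -> Rbar_lt (Rabs x) (CV_radius a) -> a 0%nat <= PSeries a x.
Proof.
  intros Ha Hx He Hr. rewrite PSeries_decr_1 by auto.
  assert (0 <= PSeries (PS_decr_1 a) x).
  { apply PS_nonneg; auto. intros n; apply Ha. apply CV_radius_inside.
    rewrite CV_radius_decr_1; auto. }
  nra.
Qed.

Lemma PS_le_ca x : 0 <= x -> PSeries (ca 1) x <= PSeries (ca 0) x.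
Proof.
  intros Hx. unfold PSeries. apply Series_le.
  - intros n. split. apply Rmult_le_pos. apply Rlt_le, ca_pos. apply pow_le; auto.
    apply Rmult_le_compat_r. apply pow_le; auto.
    unfold ca. apply Rinv_le_contravar. apply lt_0_INR.
    pose proof (lt_O_fact n); pose proof (lt_O_fact (n+0)). nia.
    apply le_INR. apply Nat.mul_le_mono_l. apply fact_le. lia.
  - generalize (exps_ca 0 x). apply ex_series_ext. intros n. rewrite pow_n_pow. unfold scal; simpl; unfold mult; simpl; ring.
Qed.

Lemma PS_ca_ge1 k x : (k <= 1)%nat -> 0 <= x -> 1 <= PSeries (ca k) x.
Proof.
  intros Hk Hx. replace 1 with (ca k 0).
  apply PS_ge0; auto. intros n; apply Rlt_le, ca_pos. apply exps_ca. rewrite rad_ca; exact I.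
  unfold ca. destruct k as [|[|]]; simpl; try lra; lia.
Qed.

Definition PA (s : R) := PSeries (ca 0) (s / 4).
Definition PC (s : R) := PSeries (PS_incr_1 (ca 1)) (s / 4).

Lemma PC_eq s : PC s = s / 4 * PSeries (ca 1) (s/4).
Proof. unfold PC. apply PSeries_incr_1. Qed.

Lemma PA_der s : is_derive PA s (/ 4 * PSeries (ca 1) (s / 4)).
Proof.
  unfold PA.
  apply is_derive_ext with (fun t => PSeries (ca 0) (t/4)). reflexivity.
  replace (/ 4 * PSeries (ca 1) (s / 4)) with (/4 * PSeries (PS_derive (ca 0)) (s / 4)).
  apply (is_derive_comp (PSeries (ca 0)) (fun t => t/4)).
  apply is_derive_PSeries. rewrite rad_ca. exact I.
  auto_derive. auto. lra.
  f_equal. apply PSeries_ext. intros n. unfold PS_derive, ca.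
  change (fact (S n)) with (S n * fact n)%nat. rewrite Nat.add_0_r.
  replace (n+1)%nat with (S n) by lia. change (fact (S n)) with (S n * fact n)%nat.
  rewrite !mult_INR.
  assert (0 < INR (fact n)) by (apply lt_0_INR, lt_O_fact).
  assert (0 < INR (S n)) by (apply lt_0_INR; lia).
  field. lra.
Qed.

Lemma PC_der s : is_derive PC s (/ 4 * PA s).
Proof.
  unfold PC, PA.
  apply is_derive_ext with (fun t => PSeries (PS_incr_1 (ca 1)) (t/4)). reflexivity.
  replace (/ 4 * PSeries (ca 0) (s / 4)) with (/4 * PSeries (PS_derive (PS_incr_1 (ca 1))) (s / 4)).
  apply (is_derive_comp (PSeries (PS_incr_1 (ca 1))) (fun t => t/4)).
  apply is_derive_PSeries. rewrite CV_radius_incr_1, rad_ca. exact I.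
  auto_derive. auto. lra.
  f_equal. apply PSeries_ext. intros n. unfold PS_derive, PS_incr_1, ca.
  rewrite Nat.add_0_r. replace (n+1)%nat with (S n) by lia. change (fact (S n)) with (S n * fact n)%nat.
  rewrite !mult_INR.
  assert (0 < INR (fact n)) by (apply lt_0_INR, lt_O_fact).
  assert (0 < INR (S n)) by (apply lt_0_INR; lia).
  simpl zero. field. lra.
Qed.
Lemma left_smaller (f : R -> R) x l a : is_derive f x l -> 0 < l -> a < x ->
  exists t, a <= t < x /\ f t < f x.
Proof.
  intros Hd Hl Hax. apply is_derive_Reals in Hd.
  destruct (Hd l Hl) as [d Hdl].
  set (h := - Rmin (d/2) (x - a)).
  assert (Hm1 : 0 < Rmin (d/2) (x-a)) by (apply Rmin_pos; [destruct d; simpl; lra| lra]).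
  assert (Hm2 : Rmin (d/2) (x-a) <= d/2) by apply Rmin_l.
  assert (Hm3 : Rmin (d/2) (x-a) <= x - a) by apply Rmin_r.
  assert (hne : h <> 0) by (unfold h; lra).
  assert (hlt : Rabs h < d).
  { unfold h. rewrite Rabs_Ropp, Rabs_pos_eq by lra. destruct d; simpl in *; lra. }
  specialize (Hdl h hne hlt).
  exists (x + h). split. unfold h; lra.
  apply Rabs_lt_between in Hdl. destruct Hdl as [H1 _].
  assert (0 < (f (x + h) - f x) / h) by lra.
  assert (h < 0) by (unfold h; lra).
  assert (f (x+h) - f x < 0).
  { destruct (Rle_or_lt 0 (f (x+h) - f x)) as [Hc|Hc]; auto.
    exfalso. assert ((f (x + h) - f x) / h <= 0).
    { unfold Rdiv. assert (/h < 0) by (apply Rinv_lt_0_compat; lra). nra. } lra. }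
  lra.
Qed.

Lemma minlemma (f fd : R -> R) a b : a < b ->
  (forall t, a <= t <= b -> is_derive f t (fd t)) ->
  (forall t, a <= t <= b -> f t <= 0 -> 0 < fd t) ->
  f b <= 0 -> f a < f b.
Proof.
  intros Hab Hd Hp Hb.
  destruct (continuity_ab_min f a b) as [mx [Hmin Hmx]]. lra.
  { intros c Hc. apply continuity_pt_filterlim. apply (ex_derive_continuous (K:=R_AbsRing) (V:=R_NormedModule)).
    eexists; apply Hd; auto. }
  destruct (Rlt_or_le (f a) (f b)) as [H|H]; auto. exfalso.
  assert (Hfm : f mx <= f b) by (apply Hmin; lra).
  destruct (Rlt_or_le a mx) as [Ham|Ham].
  - destruct (left_smaller f mx (fd mx) a (Hd mx ltac:(lra)) (Hp mx ltac:(lra) ltac:(lra)) Ham) as [t [Ht Hft]].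
    assert (f mx <= f t) by (apply Hmin; lra). lra.
  - assert (mx = a) by lra. subst mx.
    destruct (left_smaller f b (fd b) a (Hd b ltac:(lra)) (Hp b ltac:(lra) ltac:(lra)) Hab) as [t [Ht Hft]].
    assert (f a <= f t) by (apply Hmin; lra). lra.
Qed.

Lemma poslemma (f fd : R -> R) :
  (forall t, 0 < t -> is_derive f t (fd t)) ->
  (forall t, 0 < t -> f t <= 0 -> 0 < fd t) ->
  (forall eps, 0 < eps -> exists d, 0 < d /\ forall t, 0 < t < d -> - eps < f t) ->
  forall b, 0 < b -> 0 < f b.
Proof.
  intros Hd Hp Hl b Hb.
  destruct (Rlt_or_le 0 (f b)) as [H|H]; auto. exfalso.
  assert (Hc : f (b/2) < f b) by (apply minlemma with fd; auto; intros; try apply Hd; try apply Hp; lra).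
  destruct (Hl (- f (b/2))) as [d [Hd0 Hdd]]. lra.
  set (t := Rmin d (b/2) / 2).
  assert (0 < Rmin d (b/2)) by (apply Rmin_pos; lra).
  assert (Rmin d (b/2) <= d) by apply Rmin_l.
  assert (Rmin d (b/2) <= b/2) by apply Rmin_r.
  assert (f t < f (b/2)) by (apply minlemma with fd; unfold t in *; auto; intros; try apply Hd; try apply Hp; lra).
  assert (- - f (b/2) < f t) by (apply Hdd; unfold t; lra).
  lra.
Qed.

Definition v1 (s : R) : R := 2 * PC s / (sqrt s * PA s).

Lemma PA_ge1 s : 0 <= s -> 1 <= PA s.
Proof. intros; unfold PA; apply PS_ca_ge1; lia || lra. Qed.

Lemma PC_facts s : 0 < s -> 0 < PC s /\ 4 * PC s <= s * PA s.
Proof.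
  intros Hs. rewrite PC_eq. unfold PA.
  assert (1 <= PSeries (ca 1) (s/4)) by (apply PS_ca_ge1; lia || lra).
  assert (PSeries (ca 1) (s/4) <= PSeries (ca 0) (s/4)) by (apply PS_le_ca; lra).
  split; nra.
Qed.

Lemma sqrt_facts s : 0 < s -> 0 < sqrt s /\ sqrt s * sqrt s = s.
Proof. intros; split; [apply sqrt_lt_R0; auto | apply sqrt_sqrt; lra]. Qed.

Lemma v1_pos s : 0 < s -> 0 < v1 s.
Proof.
  intros Hs. destruct (PC_facts s Hs). destruct (sqrt_facts s Hs). pose proof (PA_ge1 s (Rlt_le _ _ Hs)). unfold v1.
  apply Rdiv_lt_0_compat; [lra|]. apply Rmult_lt_0_compat; lra.
Qed.

Lemma v1_le s : 0 < s -> v1 s <= sqrt s / 2.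
Proof.
  intros Hs. destruct (PC_facts s Hs). destruct (sqrt_facts s Hs). pose proof (PA_ge1 s (Rlt_le _ _ Hs)). unfold v1.
  apply Rmult_le_reg_r with (2 * (sqrt s * PA s)). apply Rmult_lt_0_compat; [lra|]. apply Rmult_lt_0_compat; lra.
  field_simplify. rewrite pow2_sqrt by lra. lra. split; lra.
Qed.

Lemma v1_der s : 0 < s ->
  is_derive v1 s (/(2 * sqrt s) * ((1 - v1 s ^ 2) * 1 - 1 / sqrt s * v1 s)).
Proof.
  intros Hs. destruct (PC_facts s Hs). destruct (sqrt_facts s Hs). pose proof (PA_ge1 s (Rlt_le _ _ Hs)).
  assert (dA : Derive (fun x => PA x) s = PC s / (sqrt s * sqrt s)).
  { apply is_derive_unique. rewrite H2, PC_eq. replace (s / 4 * PSeries (ca 1) (s / 4) / s) with (/ 4 * PSeries (ca 1) (s / 4)) by (field; lra). apply PA_der. }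
  assert (dC : Derive (fun x => PC x) s = / 4 * PA s) by (apply is_derive_unique, PC_der).
  assert (eA : ex_derive (fun x => PA x) s) by (eexists; apply PA_der).
  assert (eC : ex_derive (fun x => PC x) s) by (eexists; apply PC_der).
  unfold v1. evar (e : R).
  assert (is_derive (fun t => 2 * PC t / (sqrt t * PA t)) s e).
  { auto_derive. repeat split; auto. apply Rmult_integral_contrapositive; split; lra.
    rewrite dA, dC. unfold e. reflexivity. }
  replace (/(2 * sqrt s) * _) with e; auto. unfold e.
  field. split; lra.
Qed.

Fixpoint Vp (n : nat) (s : R) : R * R :=
  match n with
  | O => (1, v1 s)
  | S m => let (a, b) := Vp m s in (b, 2 * INR (S m) * b / (sqrt s * (1 - b ^ 2)) - a)
  end.

Definition V (n : nat) (s : R) : R := fst (Vp n s).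

Lemma V_snd n s : snd (Vp n s) = V (S n) s.
Proof. unfold V. simpl. destruct (Vp n s); reflexivity. Qed.

Lemma V_SS m s : V (S (S m)) s = 2 * INR (S m) * V (S m) s / (sqrt s * (1 - V (S m) s ^ 2)) - V m s.
Proof. unfold V at 1. simpl Vp. rewrite <- (V_snd m s). unfold V. destruct (Vp m s); reflexivity. Qed.

Lemma V_0 s : V 0 s = 1. Proof. reflexivity. Qed.
Lemma V_1 s : V 1 s = v1 s. Proof. reflexivity. Qed.

Definition DA (m : nat) (s : R) := /(2 * sqrt s) * (INR m / sqrt s * V m s - (1 - V m s ^ 2) * V (S m) s).
Definition DB (m : nat) (s : R) := /(2 * sqrt s) * ((1 - V (S m) s ^ 2) * V m s - INR (S m) / sqrt s * V (S m) s).

Definition Inv (m : nat) := forall s, 0 < s ->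
  0 < V m s <= 1 /\ 0 < V (S m) s < 1 /\ V (S m) s <= sqrt s / INR (m + 2) /\
  is_derive (V m) s (DA m s) /\ is_derive (V (S m)) s (DB m s).

Lemma der_1m (f : R -> R) x l : is_derive f x l -> is_derive (fun t => 1 - f t) x (- l).
Proof.
  intros H. assert (e : ex_derive (fun t => f t) x) by (eexists; exact H).
  assert (d : Derive (fun t => f t) x = l) by (apply is_derive_unique; exact H).
  auto_derive; auto. rewrite d; ring.
Qed.

Lemma Inv0 : Inv 0.
Proof.
  assert (Hd : forall s, 0 < s -> is_derive (V 1) s (DB 0 s)).
  { intros s Hs. unfold DB. rewrite V_0. simpl INR. apply (v1_der s Hs). }
  assert (Hlt : forall s, 0 < s -> V 1 s < 1).
  { intros s Hs. cut (0 < 1 - V 1 s). lra. revert s Hs.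
    apply (poslemma (fun t => 1 - V 1 t) (fun t => - DB 0 t)).
    - intros t Ht. apply der_1m. apply Hd; auto.
    - intros t Ht Hf. unfold DB. rewrite V_0. destruct (sqrt_facts t Ht).
      assert (0 < /(2 * sqrt t)) by (apply Rinv_0_lt_compat; lra).
      assert (0 < INR 1 / sqrt t * V 1 t) by (simpl INR; apply Rmult_lt_0_compat; [apply Rdiv_lt_0_compat|]; lra).
      assert ((1 - V 1 t ^ 2) * 1 <= 0) by (simpl; nra). nra.
    - intros eps Heps. exists 1. split. lra. intros t Ht.
      pose proof (v1_le t ltac:(lra)). 
      assert (sqrt t < 1). { rewrite <- sqrt_1. apply sqrt_lt_1; lra. }
      rewrite V_1. lra. }
  intros s Hs. split; [|split; [|split; [|split]]].
  - rewrite V_0; lra.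
  - split; [rewrite V_1; apply v1_pos; auto | apply Hlt; auto].
  - rewrite V_1. replace (INR (0+2)) with 2 by (simpl; lra). apply v1_le; auto.
  - unfold DA. rewrite V_0. replace (/ (2 * sqrt s) * (INR 0 / sqrt s * 1 - (1 - 1 ^ 2) * V 1 s)) with 0 by (simpl; field; destruct (sqrt_facts s Hs); lra).
    apply (is_derive_ext (fun _ : R => 1) (V 0) s 0 (fun t => eq_refl)). apply (is_derive_const (K:=R_AbsRing) (V:=R_NormedModule) 1 s).
  - apply Hd; auto.
Qed.

Lemma small eps : 0 < eps -> exists d, 0 < d /\ forall t, 0 < t < d ->
  0 < sqrt t /\ sqrt t < eps /\ sqrt t < 1/2.
Proof.
  intros He. exists (Rmin (1/4) (eps ^ 2)). split.
  apply Rmin_pos; [lra| apply pow_lt; lra].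
  intros t [Ht1 Ht2]. pose proof (Rmin_l (1/4) (eps^2)). pose proof (Rmin_r (1/4) (eps^2)).
  split. apply sqrt_lt_R0; lra. split.
  rewrite <- (sqrt_pow2 eps) by lra. apply sqrt_lt_1; [lra | apply pow_le; lra | lra].
  replace (1/2) with (sqrt ((1/2)^2)) by (apply sqrt_pow2; lra). apply sqrt_lt_1; lra.
Qed.

Lemma step_der (A B : R -> R) k s : 0 < s -> (1 - B s ^ 2) <> 0 ->
  is_derive A s (/(2 * sqrt s) * ((k - 1) / sqrt s * A s - (1 - A s ^ 2) * B s)) ->
  is_derive B s (/(2 * sqrt s) * ((1 - B s ^ 2) * A s - k / sqrt s * B s)) ->
  is_derive (fun t => 2 * k * B t / (sqrt t * (1 - B t ^ 2)) - A t) s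
   (/(2 * sqrt s) * ((1 - (2 * k * B s / (sqrt s * (1 - B s ^ 2)) - A s) ^ 2) * B s
        - (k+1) / sqrt s * (2 * k * B s / (sqrt s * (1 - B s ^ 2)) - A s))).
Proof.
  intros Hs Hb HA HB.
  assert (Hx : 0 < sqrt s) by (apply sqrt_lt_R0; auto).
  assert (dA : Derive (fun x => A x) s = (/(2 * sqrt s) * ((k - 1) / sqrt s * A s - (1 - A s ^ 2) * B s))) by (apply is_derive_unique; exact HA).
  assert (dB : Derive (fun x => B x) s = (/(2 * sqrt s) * ((1 - B s ^ 2) * A s - k / sqrt s * B s))) by (apply is_derive_unique; exact HB).
  assert (eA : ex_derive (fun x => A x) s) by (eexists; exact HA).
  assert (eB : ex_derive (fun x => B x) s) by (eexists; exact HB).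
  evar (e : R).
  assert (is_derive (fun t => 2 * k * B t / (sqrt t * (1 - B t ^ 2)) - A t) s e).
  { auto_derive. repeat split; auto. apply Rmult_integral_contrapositive; split; [lra|]. simpl in Hb; lra.
    rewrite dA, dB. unfold e. reflexivity. }
  replace (/(2 * sqrt s) * _) with e; auto. unfold e.
  field. split; lra.
Qed.

Lemma Inv_step m : Inv m -> Inv (S m).
Proof.
  intros H.
  set (k := INR (S m)).
  assert (Hk : 1 <= k) by (unfold k; rewrite S_INR; pose proof (pos_INR m); lra).
  assert (Hb1 : forall t, 0 < t -> 1 - V (S m) t ^ 2 <> 0).
  { intros t Ht. destruct (H t Ht) as [_ [[? ?] _]]. simpl; nra. }
  assert (HdA : forall t, 0 < t -> is_derive (V (S m)) t (DA (S m) t)).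
  { intros t Ht. destruct (H t Ht) as [_ [_ [_ [_ Hd]]]].
    replace (DA (S m) t) with (DB m t); auto.
    unfold DA, DB. rewrite V_SS. destruct (sqrt_facts t Ht). field. split; [apply Hb1; auto|lra]. }
  assert (HdB : forall t, 0 < t -> is_derive (V (S (S m))) t (DB (S m) t)).
  { intros t Ht. destruct (H t Ht) as [_ [_ [_ [Ha Hb]]]].
    apply (is_derive_ext (fun t => 2 * k * V (S m) t / (sqrt t * (1 - V (S m) t ^ 2)) - V m t)).
    { intros; rewrite V_SS; reflexivity. }
    unfold DB. rewrite V_SS. replace (INR (S (S m))) with (k + 1) by (unfold k; rewrite (S_INR (S m)); reflexivity).
    unfold k. apply step_der; auto.
    replace (INR (S m) - 1) with (INR m) by (rewrite S_INR; ring). exact Ha. }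
  set (c := V (S (S m))).
  assert (Hcgt : forall t, 0 < t -> -1 < c t).
  { intros t Ht. unfold c. rewrite V_SS. destruct (H t Ht) as [[? ?] [[? ?] _]]. destruct (sqrt_facts t Ht).
    assert (0 < 2 * INR (S m) * V (S m) t / (sqrt t * (1 - V (S m) t ^ 2))).
    { apply Rdiv_lt_0_compat. apply Rmult_lt_0_compat; [|lra]. fold k; lra.
      apply Rmult_lt_0_compat; [lra|]. simpl; nra. }
    lra. }
  assert (Hc3 : forall t, 0 < t -> sqrt t < 1/2 -> c t < 3).
  { intros t Ht Hx. unfold c. rewrite V_SS. destruct (H t Ht) as [[? ?] [[? ?] [Hle _]]]. destruct (sqrt_facts t Ht).
    replace (INR (m+2)) with (k + 1) in Hle by (unfold k; rewrite plus_INR, S_INR; simpl; ring).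
    assert (Hv : V (S m) t <= sqrt t / 2).
    { apply Rle_trans with (sqrt t / (k+1)); auto. unfold Rdiv. apply Rmult_le_compat_l; [lra|].
      apply Rinv_le_contravar; lra. }
    assert (Hq : V (S m) t * (k + 1) <= sqrt t).
    { apply Rmult_le_reg_r with (/(k+1)). apply Rinv_0_lt_compat; lra. 
      rewrite Rmult_assoc, Rinv_r by lra. lra. }
    fold k. assert (3/4 < 1 - V (S m) t ^ 2) by (simpl; nra).
    apply Rle_lt_trans with (2 * k * V (S m) t / (sqrt t * (1 - V (S m) t ^ 2))). lra.
    apply Rmult_lt_reg_r with (sqrt t * (1 - V (S m) t ^ 2)). apply Rmult_lt_0_compat; lra.
    unfold Rdiv. rewrite Rmult_assoc, Rinv_l by (apply Rgt_not_eq, Rmult_lt_0_compat; lra). rewrite Rmult_1_r.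
    nra. }
  assert (HdC : forall t, 0 < t -> is_derive c t (/(2 * sqrt t) * ((1 - c t ^ 2) * V (S m) t - (k + 1) / sqrt t * c t))).
  { intros t Ht. replace (k + 1) with (INR (S (S m))) by (unfold k; rewrite (S_INR (S m)); reflexivity). apply HdB; auto. }
  assert (Hpow : forall t, 0 < t -> 0 < sqrt t ^ m) by (intros t Ht; apply pow_lt, sqrt_lt_R0; auto).
  assert (Hf1 : forall t, 0 < t -> 0 < sqrt t ^ (S m) * (sqrt t * sqrt t / (k + 2) - sqrt t * c t)).
  { apply (poslemma _ (fun t => sqrt t ^ m * sqrt t / 2 * (1 - (1 - c t ^ 2) * V (S m) t))).
    - intros t Ht. destruct (sqrt_facts t Ht).
      assert (dc : Derive (fun x => c x) t = (/(2 * sqrt t) * ((1 - c t ^ 2) * V (S m) t - (k + 1) / sqrt t * c t))) by (apply is_derive_unique; apply HdC; auto).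
      assert (ec : ex_derive (fun x => c x) t) by (eexists; apply HdC; auto).
      evar (e : R).
      assert (is_derive (fun t => sqrt t ^ (S m) * (sqrt t * sqrt t / (k + 2) - sqrt t * c t)) t e).
      { auto_derive. repeat split; auto; lra. rewrite dc. unfold e. reflexivity. }
      replace (sqrt t ^ m * sqrt t / 2 * _) with e; auto. unfold e. change (match m with 0%nat => 1 | S _ => INR m + 1 end) with k. simpl pow.
      field. lra.
    - intros t Ht _. destruct (H t Ht) as [_ [[Hb0 Hb1'] _]]. destruct (sqrt_facts t Ht).
      specialize (Hpow t Ht).
      assert (0 <= c t ^ 2) by (apply pow2_ge_0).
      assert ((1 - c t ^ 2) * V (S m) t <= V (S m) t) by nra.
      apply Rmult_lt_0_compat; [|lra]. apply Rmult_lt_0_compat; [|lra]. apply Rmult_lt_0_compat; lra.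
    - intros eps Heps. destruct (small (eps/3)) as [d [Hd Hdd]]. lra.
      exists d. split; auto. intros t Ht. destruct (Hdd t Ht) as [Hx0 [Hx1 Hx2]].
      assert (Htt : 0 < t) by lra.
      pose proof (Hc3 t Htt Hx2).
      assert (HP : 0 <= sqrt t ^ S m < 1) by (apply pow_lt_1_compat; lia || lra).
      assert (0 <= sqrt t * sqrt t / (k + 2)) by (apply Rmult_le_pos; [nra| apply Rlt_le, Rinv_0_lt_compat; lra]).
      assert (sqrt t ^ S m * (sqrt t * c t) < eps).
      { destruct (Rle_or_lt (c t) 0). 
        - assert (sqrt t * c t <= 0) by nra. nra.
        - assert (sqrt t * c t < eps) by nra. nra. }
      nra. }
  assert (Hcle : forall t, 0 < t -> c t <= sqrt t / INR (S m + 2)).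
  { intros t Ht. specialize (Hf1 t Ht). destruct (sqrt_facts t Ht).
    replace (INR (S m + 2)) with (k + 2) by (unfold k; rewrite plus_INR; simpl; ring).
    assert (0 < sqrt t ^ S m) by (apply pow_lt; lra).
    assert (0 < sqrt t * sqrt t / (k + 2) - sqrt t * c t).
    { destruct (Rle_or_lt (sqrt t * sqrt t / (k + 2) - sqrt t * c t) 0); auto. nra. }
    assert (c t < sqrt t / (k+2)).
    { apply Rmult_lt_reg_l with (sqrt t); auto. replace (sqrt t * (sqrt t / (k+2))) with (sqrt t * sqrt t / (k+2)) by (field; lra). lra. }
    lra. }
  assert (Hf2 : forall t, 0 < t -> 0 < sqrt t ^ (S m) * (sqrt t * c t)).
  { apply (poslemma _ (fun t => sqrt t ^ m * sqrt t / 2 * ((1 - c t ^ 2) * V (S m) t))).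
    - intros t Ht. destruct (sqrt_facts t Ht).
      assert (dc : Derive (fun x => c x) t = (/(2 * sqrt t) * ((1 - c t ^ 2) * V (S m) t - (k + 1) / sqrt t * c t))) by (apply is_derive_unique; apply HdC; auto).
      assert (ec : ex_derive (fun x => c x) t) by (eexists; apply HdC; auto).
      evar (e : R).
      assert (is_derive (fun t => sqrt t ^ (S m) * (sqrt t * c t)) t e).
      { auto_derive. repeat split; auto; lra. rewrite dc. unfold e. reflexivity. }
      replace (sqrt t ^ m * sqrt t / 2 * _) with e; auto. unfold e. change (match m with 0%nat => 1 | S _ => INR m + 1 end) with k. simpl pow.
      field. lra.
    - intros t Ht Hle. destruct (H t Ht) as [_ [[Hb0 Hb1'] _]]. destruct (sqrt_facts t Ht).
      specialize (Hpow t Ht). pose proof (Hcgt t Ht).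
      assert (0 < sqrt t ^ S m) by (apply pow_lt; lra).
      assert (c t <= 0).
      { destruct (Rle_or_lt (c t) 0); auto. assert (0 < sqrt t * c t) by (apply Rmult_lt_0_compat; lra).
        assert (0 < sqrt t ^ S m * (sqrt t * c t)) by (apply Rmult_lt_0_compat; lra). lra. }
      assert (0 < 1 - c t ^ 2) by (simpl; nra).
      apply Rmult_lt_0_compat; [|nra]. apply Rmult_lt_0_compat; [|lra]. apply Rmult_lt_0_compat; lra.
    - intros eps Heps. destruct (small eps) as [d [Hd Hdd]]. lra.
      exists d. split; auto. intros t Ht. destruct (Hdd t Ht) as [Hx0 [Hx1 Hx2]].
      assert (Htt : 0 < t) by lra. pose proof (Hcgt t Htt).
      assert (HP : 0 <= sqrt t ^ S m < 1) by (apply pow_lt_1_compat; lia || lra).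
      assert (- sqrt t < sqrt t * c t) by nra.
      destruct (Rle_or_lt 0 (sqrt t * c t)). nra. nra. }
  assert (Hcpos : forall t, 0 < t -> 0 < c t).
  { intros t Ht. specialize (Hf2 t Ht). destruct (sqrt_facts t Ht).
    assert (0 < sqrt t ^ S m) by (apply pow_lt; lra).
    destruct (Rlt_or_le 0 (c t)); auto. assert (sqrt t * c t <= 0) by nra.
    assert (sqrt t ^ S m * (sqrt t * c t) <= 0) by nra. lra. }
  assert (Hf3 : forall t, 0 < t -> 0 < 1 - c t).
  { apply (poslemma _ (fun t => - (/(2 * sqrt t) * ((1 - c t ^ 2) * V (S m) t - (k + 1) / sqrt t * c t)))).
    - intros t Ht. apply der_1m. apply HdC; auto.
    - intros t Ht Hle. destruct (H t Ht) as [_ [[Hb0 Hb1'] _]]. destruct (sqrt_facts t Ht).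
      assert (0 < /(2 * sqrt t)) by (apply Rinv_0_lt_compat; lra).
      assert (H1c : 1 - c t ^ 2 <= 0) by (simpl; nra).
      assert ((1 - c t ^ 2) * V (S m) t <= 0) by nra.
      assert (0 < (k + 1) / sqrt t * c t) by (apply Rmult_lt_0_compat; [apply Rdiv_lt_0_compat|]; lra).
      nra.
    - intros eps Heps. destruct (small eps) as [d [Hd Hdd]]. lra.
      exists d. split; auto. intros t Ht. destruct (Hdd t Ht) as [Hx0 [Hx1 Hx2]].
      assert (Htt : 0 < t) by lra. pose proof (Hcle t Htt).
      replace (INR (S m + 2)) with (k + 2) in H0 by (unfold k; rewrite plus_INR; simpl; ring).
      assert (sqrt t / (k + 2) < 1).
      { apply Rmult_lt_reg_r with (k+2). lra. unfold Rdiv. rewrite Rmult_assoc, Rinv_l by lra. lra. }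
      lra. }
  intros s Hs. destruct (H s Hs) as [_ [[Hb0 Hb1'] _]]. unfold c in *.
  split; [lra|]. split; [split; [apply Hcpos; auto| pose proof (Hf3 s Hs); lra]|].
  split; [apply Hcle; auto|]. split; [apply HdA; auto| apply HdB; auto].
Qed.

Lemma Inv_all m : Inv m.
Proof. induction m. apply Inv0. apply Inv_step; auto. Qed.

Lemma bessel0 s : 0 < s -> besselI 0 (sqrt s) = PA s.
Proof.
  intros Hs. unfold besselI, PA. replace ((sqrt s / 2) ^ 2) with (s / 4).
  simpl. rewrite Rmult_1_l. reflexivity.
  replace ((sqrt s / 2)^2) with (sqrt s ^ 2 / 4) by (simpl; field). rewrite pow2_sqrt; lra.
Qed.

Lemma bessel1 s : 0 < s -> besselI 1 (sqrt s) = 2 * PC s / sqrt s.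
Proof.
  intros Hs. destruct (sqrt_facts s Hs). unfold besselI. rewrite PC_eq.
  replace ((sqrt s / 2) ^ 2) with (s / 4).
  2: { replace ((sqrt s / 2)^2) with (sqrt s ^ 2 / 4) by (simpl; field). rewrite pow2_sqrt; lra. }
  change (PSeries (fun m : nat => / INR (fact m * fact (m + 1))) (s / 4)) with (PSeries (ca 1) (s/4)).
  set (B := PSeries (ca 1) (s/4)). set (x := sqrt s) in *. rewrite <- H0. field. lra.
Qed.

Lemma gpair_V n s : 0 < s -> gpair n s = (1 - / (V n s) ^ 2, 1 - / (V (S n) s) ^ 2).
Proof.
  intros Hs. destruct (sqrt_facts s Hs) as [Hx Hss].
  induction n.
  - simpl gpair. rewrite V_0, V_1. f_equal. simpl; field.
    unfold g1, v1. rewrite bessel0, bessel1 by auto.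
    destruct (PC_facts s Hs). pose proof (PA_ge1 s (Rlt_le _ _ Hs)).
    field. repeat split; lra.
  - simpl gpair. rewrite IHn. f_equal. unfold gnext.
    destruct (Inv_all n s Hs) as [[Ha0 Ha1] [[Hb0 Hb1] _]].
    replace (1 - (1 - / V (S n) s ^ 2)) with ((/ V (S n) s) ^ 2) by (field; lra).
    replace (1 - (1 - / V n s ^ 2)) with ((/ V n s) ^ 2) by (field; lra).
    rewrite !sqrt_pow2 by (apply Rlt_le, Rinv_0_lt_compat; lra).
    rewrite V_SS. f_equal. f_equal. f_equal.
    assert (1 - V (S n) s ^ 2 <> 0) by (simpl; nra).
    change (match n with 0%nat => 1 | S _ => INR n + 1 end) with (INR (S n)).
    assert (1 - / V (S n) s ^ 2 <> 0).
    { intro H'. apply H. replace (1 - V (S n) s ^ 2) with (- (V (S n) s ^ 2) * (1 - / V (S n) s ^ 2)) by (field; lra). rewrite H'. ring. }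
    field. repeat split; lra.
Qed.

Lemma g_eq m t : 0 < t -> g (S m) t = 1 - / (V (S m) t) ^ 2.
Proof. intros Ht. unfold g. rewrite gpair_V by auto. reflexivity. Qed.

Lemma loc_pos s (P : R -> Prop) : 0 < s -> (forall t, 0 < t -> P t) -> locally s P.
Proof.
  intros Hs HP. exists (mkposreal s Hs). intros y Hy. apply HP.
  unfold ball in Hy; simpl in Hy. unfold AbsRing_ball, abs, minus, plus, opp in Hy; simpl in Hy.
  apply Rabs_lt_between in Hy. lra.
Qed.

Definition Gd (m : nat) (t : R) := 2 * DB m t / V (S m) t ^ 3.

Lemma g_der m t : 0 < t -> is_derive (g (S m)) t (Gd m t).
Proof.
  intros Ht. destruct (Inv_all m t Ht) as [[Ha0 Ha1] [[Hb0 Hb1] [_ [HA HB]]]].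
  apply (is_derive_ext_loc (fun t => 1 - / (V (S m) t) ^ 2)).
  { apply loc_pos; auto. intros; symmetry; apply g_eq; auto. }
  assert (dB : Derive (fun x => V (S m) x) t = DB m t) by (apply is_derive_unique; exact HB).
  assert (eB : ex_derive (fun x => V (S m) x) t) by (eexists; exact HB).
  evar (e : R).
  assert (is_derive (fun t => 1 - / (V (S m) t) ^ 2) t e).
  { auto_derive. repeat split; auto. apply Rgt_not_eq; nra. rewrite dB. unfold e. reflexivity. }
  replace (Gd m t) with e; auto. unfold e, Gd. field. lra.
Qed.

Lemma Derive_g m t : 0 < t -> Derive (g (S m)) t = Gd m t.
Proof. intros; apply is_derive_unique, g_der; auto. Qed.

Lemma ode m s : 0 < s ->
  ex_derive (Derive (g (S m))) s /\
  Derive (Derive (g (S m))) s =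
   (3 * g (S m) s - 1) / (2 * g (S m) s * (g (S m) s - 1)) * Derive (g (S m)) s ^ 2 - / s * Derive (g (S m)) s
   - (INR (S m)) ^ 2 * (g (S m) s - 1) ^ 2 / (2 * s ^ 2 * g (S m) s) + g (S m) s / (2 * s).
Proof.
  intros Hs. destruct (Inv_all m s Hs) as [[Ha0 Ha1] [[Hb0 Hb1] [_ [HA HB]]]].
  destruct (sqrt_facts s Hs) as [Hx Hss].
  assert (dA : Derive (fun x => V m x) s = DA m s) by (apply is_derive_unique; exact HA).
  assert (eA : ex_derive (fun x => V m x) s) by (eexists; exact HA).
  assert (dB : Derive (fun x => V (S m) x) s = DB m s) by (apply is_derive_unique; exact HB).
  assert (eB : ex_derive (fun x => V (S m) x) s) by (eexists; exact HB).
  evar (e : R).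
  assert (He : is_derive (fun t => 2 * (/(2*sqrt t) * ((1 - V (S m) t ^2) * V m t - INR (S m) / sqrt t * V (S m) t)) / V (S m) t ^ 3) s e).
  { auto_derive. repeat split; auto. all: try lra. apply Rgt_not_eq. repeat apply Rmult_lt_0_compat; lra. rewrite dA, dB. unfold e. reflexivity. }
  assert (He' : is_derive (Derive (g (S m))) s e).
  { apply (is_derive_ext_loc _ _ _ _ (loc_pos s _ Hs (fun t Ht => eq_sym (Derive_g m t Ht)))).
    exact He. }
  split. eexists; exact He'.
  rewrite (is_derive_unique _ _ _ He'). rewrite Derive_g, g_eq by auto.
  unfold e, Gd, DA, DB.
  assert (1 - V (S m) s ^ 2 <> 0) by (simpl; nra).
  change (match m with 0%nat => 1 | S _ => INR m + 1 end) with (INR (S m)).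
  replace (INR m) with (INR (S m) - 1) by (rewrite S_INR; ring).
  assert (1 - / V (S m) s ^ 2 <> 0).
  { intro H'. apply H. replace (1 - V (S m) s ^ 2) with (- (V (S m) s ^ 2) * (1 - / V (S m) s ^ 2)) by (field; lra). rewrite H'. ring. }
  set (a := V m s) in *. set (b := V (S m) s) in *. set (k := INR (S m)) in *.
  set (x := sqrt s) in *. rewrite <- Hss.
  field. repeat split; lra.
Qed.

Definition Hx (m : nat) (t : R) :=
  (sqrt t * sqrt t * (1 - V m t ^ 2) * (1 - V (S m) t ^ 2) + 2 * INR (S m) * sqrt t * V m t * V (S m) t) / 4.

Lemma Hfun_eq m t : 0 < t -> Hfun (S m) t = Hx m t.
Proof.
  intros Ht. destruct (Inv_all m t Ht) as [[Ha0 Ha1] [[Hb0 Hb1] _]].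
  destruct (sqrt_facts t Ht) as [Hx0 Hss].
  unfold Hfun. rewrite Derive_g, g_eq by auto. unfold Hx, Gd, DB.
  assert (1 - V (S m) t ^ 2 <> 0) by (simpl; nra).
  assert (1 - / V (S m) t ^ 2 <> 0).
  { intro H'. apply H. replace (1 - V (S m) t ^ 2) with (- (V (S m) t ^ 2) * (1 - / V (S m) t ^ 2)) by (field; lra). rewrite H'. ring. }
  set (a := V m t) in *. set (b := V (S m) t) in *. set (k := INR (S m)) in *.
  set (x := sqrt t) in *. rewrite <- Hss.
  field. repeat split; lra.
Qed.

Lemma Hx_der m t : 0 < t -> is_derive (Hx m) t ((1 - V (S m) t ^ 2) / 4).
Proof.
  intros Ht. destruct (Inv_all m t Ht) as [[Ha0 Ha1] [[Hb0 Hb1] [_ [HA HB]]]].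
  destruct (sqrt_facts t Ht) as [Hx0 Hss].
  assert (dA : Derive (fun x => V m x) t = DA m t) by (apply is_derive_unique; exact HA).
  assert (eA : ex_derive (fun x => V m x) t) by (eexists; exact HA).
  assert (dB : Derive (fun x => V (S m) x) t = DB m t) by (apply is_derive_unique; exact HB).
  assert (eB : ex_derive (fun x => V (S m) x) t) by (eexists; exact HB).
  evar (e : R).
  assert (He : is_derive (Hx m) t e).
  { unfold Hx. auto_derive. repeat split; auto. rewrite dA, dB. unfold e. reflexivity. }
  replace ((1 - V (S m) t ^ 2) / 4) with e; auto. unfold e, DA, DB.
  change (match m with 0%nat => 1 | S _ => INR m + 1 end) with (INR (S m)).
  replace (INR m) with (INR (S m) - 1) by (rewrite S_INR; ring).
  set (a := V m t) in *. set (b := V (S m) t) in *. set (k := INR (S m)) in *.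
  set (x := sqrt t) in *.
  field. lra.
Qed.

Lemma H1_der m t : 0 < t -> is_derive (fun t => (1 - V (S m) t ^ 2) / 4) t (- (2 * V (S m) t * DB m t) / 4).
Proof.
  intros Ht. destruct (Inv_all m t Ht) as [[Ha0 Ha1] [[Hb0 Hb1] [_ [HA HB]]]].
  assert (dB : Derive (fun x => V (S m) x) t = DB m t) by (apply is_derive_unique; exact HB).
  assert (eB : ex_derive (fun x => V (S m) x) t) by (eexists; exact HB).
  auto_derive; auto. rewrite dB. field.
Qed.

Lemma sigma m s : 0 < s ->
  ex_derive (Hfun (S m)) s /\ ex_derive (Derive (Hfun (S m))) s /\
  (s * Derive (Derive (Hfun (S m))) s) ^ 2 =
   Derive (Hfun (S m)) s * (4 * Derive (Hfun (S m)) s - 1) * (Hfun (S m) s - s * Derive (Hfun (S m)) s)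
   + / 16 * (4 * INR (S m) * Derive (Hfun (S m)) s - INR (S m)) ^ 2.
Proof.
  intros Hs.
  assert (HD : forall t, 0 < t -> is_derive (Hfun (S m)) t ((1 - V (S m) t ^ 2) / 4)).
  { intros t Ht. apply (is_derive_ext_loc (Hx m)).
    apply loc_pos; auto. intros; symmetry; apply Hfun_eq; auto. apply Hx_der; auto. }
  assert (HD2 : is_derive (Derive (Hfun (S m))) s (- (2 * V (S m) s * DB m s) / 4)).
  { apply (is_derive_ext_loc (fun t => (1 - V (S m) t ^ 2) / 4)).
    apply loc_pos; auto. intros t Ht; symmetry; apply is_derive_unique, HD; auto. apply H1_der; auto. }
  split. eexists; apply HD; auto. split. eexists; exact HD2.
  rewrite (is_derive_unique _ _ _ HD2), (is_derive_unique _ _ _ (HD s Hs)), Hfun_eq by auto.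
  destruct (sqrt_facts s Hs) as [Hx0 Hss].
  unfold Hx, DB.
  set (a := V m s) in *. set (b := V (S m) s) in *. set (k := INR (S m)) in *.
  set (x := sqrt s) in *. rewrite <- Hss.
  field. lra.
Qed.

Theorem theorem9 :
  forall lam : nat, (1 <= lam)%nat ->
    (forall s, 0 < s ->
       ex_derive (g lam) s /\ ex_derive (Derive (g lam)) s /\
       let G := g lam s in
       let G' := Derive (g lam) s in
       Derive (Derive (g lam)) s =
         (3 * G - 1) / (2 * G * (G - 1)) * G' ^ 2 - / s * G'
         - (INR lam) ^ 2 * (G - 1) ^ 2 / (2 * s ^ 2 * G) + G / (2 * s)) /\
    (forall s, 0 < s ->
       ex_derive (Hfun lam) s /\ ex_derive (Derive (Hfun lam)) s /\
       let H := Hfun lam s in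
       let H' := Derive (Hfun lam) s in
       let H'' := Derive (Derive (Hfun lam)) s in
       (s * H'') ^ 2 =
         H' * (4 * H' - 1) * (H - s * H')
         + / 16 * (4 * INR lam * H' - INR lam) ^ 2).
Proof.
  intros [|m] Hlam. lia. split.
  - intros s Hs. destruct (ode m s Hs) as [E1 E2]. split.
    eexists; apply g_der; auto. split; auto.
  - intros s Hs. apply sigma; auto.
Qed.
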